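(* Let $n\ge 1$, $0\le r\le n$ and let $a$ be an integer with $a\ge 1$, and $a\ge 2$ if $r\ge 1$. Then (i) $\dim_{\mathbb K}\left(R_n/\mathcal{I}_{n,0}^{\langle a\rangle}\right)=(a-1)^{n-1}(a+n-1)$; (ii) $\dim_{\mathbb K}\left(R_n/\mathcal{I}_{n,r}^{\langle a\rangle}\right)=\sum_{i=0}^r(-1)^i\binom{r}{i}\theta_{n-i}(a-1)$, where $\theta_l(x)=x^{l-1}(x+l)$ for $l\ge 1$ and $\theta_0(x)=1$.
   Context: $\mathbb K$ is a field and $R_m=\mathbb K[x_1,\ldots,x_m]$. For integers $m\ge 1$, $0\le s\le m$ and $a\ge1$ (with $a\ge 2$ when $s\ge1$), define the weight $\omega(i)=a$ if $1\le i\le m-s$ and $\omega(i)=a-1$ if $m-s<i\le m$, and the monomial ideal $\mathcal{I}_{m,s}^{\langle a\rangle}=\langle x_i^{\omega(i)},\ x_i^{\omega(i)-1}x_j^{\omega(j)-1} : i,j\in[m],\ i\ne j\rangle\subseteq R_m$. Here $0^0=1$. *)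

(* Defs.v *)
From HB Require Import structures.
From mathcomp Require Import all_boot all_algebra.
From mathcomp Require Import mpoly.
Set Implicit Arguments. Unset Strict Implicit. Unset Printing Implicit Defensive.
Import GRing.Theory.
Local Open Scope ring_scope.

Definition in_ideal (K : fieldType) (n : nat) (I : finType)
    (g : I -> {mpoly K[n]}) (p : {mpoly K[n]}) : Prop :=
  exists c : I -> {mpoly K[n]}, p = \sum_(i : I) c i * g i.

(* dim_K (K[x_1..x_n] / <g>) = d : there are d polynomials whose classes
   modulo the ideal form a K-basis of the quotient. *)
Definition quot_dim (K : fieldType) (n : nat) (I : finType)
    (g : I -> {mpoly K[n]}) (d : nat) : Prop :=
  exists b : 'I_d -> {mpoly K[n]},
    (forall p : {mpoly K[n]}, exists c : 'I_d -> K,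
        in_ideal g (p - \sum_(k < d) c k *: b k)) /\
    (forall c : 'I_d -> K, in_ideal g (\sum_(k < d) c k *: b k) ->
        forall k, c k = 0).

(* weight: variables are indexed 0..m-1; the paper's index i (1-based) is
   i+1 here, so omega(i) = a iff i+1 <= m - s iff i < m - s. *)
Definition omega (m s a : nat) (i : 'I_m) : nat :=
  if (i < m - s)%N then a else (a - 1)%N.

(* generators of I_{m,s}^{<a>}: x_i^{omega i} and, for i <> j,
   x_i^{omega i - 1} x_j^{omega j - 1} (the diagonal pairs give 0,
   which does not change the ideal). *)
Definition Igens (K : fieldType) (m s a : nat)
    (t : 'I_m + ('I_m * 'I_m)) : {mpoly K[m]} :=
  match t with
  | inl i => 'X_i ^+ omega s a i
  | inr (i, j) => if i != j then
                    'X_i ^+ (omega s a i - 1) * 'X_j ^+ (omega s a j - 1)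
                  else 0
  end.

Definition theta (l : nat) (x : int) : int :=
  if l is 0%N then 1 else x ^+ (l - 1) * (x + l%:Z).

(* Main.v *)
Require Import Defs.
From HB Require Import structures.
From mathcomp Require Import all_boot all_algebra.
From mathcomp Require Import mpoly.
From mathcomp Require Import zify ring.
Import GRing.Theory.
Set Implicit Arguments. Unset Strict Implicit. Unset Printing Implicit Defensive.

Lemma card_ord_range a lo hi : hi <= a ->
  #|[pred x : 'I_a | lo <= x < hi]| = hi - lo.
Proof.
move=> ha; rewrite -sum1_card big_mkcond /=.
rewrite -(big_mkord xpredT (fun x => if lo <= x < hi then 1 else 0)).
have [lh|hl] := leqP lo hi; last first.
  have -> : hi - lo = 0 by apply/eqP; rewrite subn_eq0 ltnW.
  rewrite big1 // => i _; case: ifP => // /andP [l1 l2].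
  by have := leq_ltn_trans l1 l2; rewrite ltnNge ltnW.
rewrite (@big_cat_nat _ _ _ lo) ?(leq_trans lh ha) //=.
rewrite big1_seq ?add0n; last first.
  move=> i /andP [_]; rewrite mem_index_iota => /andP [_ il].
  by rewrite leqNgt il.
rewrite (@big_cat_nat _ _ _ hi) //= [X in _ + X]big1_seq ?addn0; last first.
  move=> i /andP [_]; rewrite mem_index_iota => /andP [hi' _].
  by rewrite ltnNge hi' andbF.
rewrite (eq_big_nat _ _ (F2 := fun _ => 1)); first by rewrite sum_nat_const_nat muln1.
by move=> i ->.
Qed.

Lemma card_fam n a (lo hi : 'I_n -> nat) : (forall i, hi i <= a) ->
  #|[set f : {ffun 'I_n -> 'I_a} | [forall i, lo i <= f i < hi i]]|
  = \prod_(i < n) (hi i - lo i).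
Proof.
move=> ha.
have -> : #|[set f : {ffun 'I_n -> 'I_a} | [forall i, lo i <= f i < hi i]]|
   = #|(family (fun i => [pred x : 'I_a | lo i <= x < hi i]) : simpl_pred {ffun 'I_n -> 'I_a})|.
  apply: eq_card => f; rewrite inE; apply/forallP/familyP => H i; exact: H.
rewrite card_family foldrE big_map big_enum /=.
by apply: eq_bigr => i _; apply: card_ord_range.
Qed.

Lemma prod_split n k (P : pred nat) A B : k <= n ->
  \prod_(j < n | P j) (if j < k then A else B)
  = A ^ count P (iota 0 k) * B ^ count P (iota k (n - k)).
Proof.
move=> kn; rewrite -(big_mkord P (fun j => if j < k then A else B)).
have E r C : \prod_(i <- r) (if P i then C else 1) = C ^ count P r.
  by rewrite -big_mkcond big_const_seq iter_muln_1.
rewrite (@big_cat_nat _ _ _ k) //= big_mkcond [X in _ * X = _]big_mkcond /=.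
rewrite (eq_big_nat _ _ (F2 := fun i => if P i then A else 1)); last by move=> i /andP [_ ->].
rewrite [X in _ * X](eq_big_nat _ _ (F2 := fun i => if P i then B else 1)); last first.
  by move=> i /andP [ki _]; rewrite ltnNge ki.
by rewrite !E /index_iota subn0.
Qed.

Lemma sum_split n k (P : pred nat) A B : k <= n ->
  \sum_(j < n | P j) (if j < k then A else B)
  = A * count P (iota 0 k) + B * count P (iota k (n - k)).
Proof.
move=> kn; rewrite -(big_mkord P (fun j => if j < k then A else B)).
have E r C : \sum_(i <- r) (if P i then C else 0) = C * count P r.
  by rewrite -big_mkcond big_const_seq iter_addn_0.
rewrite (@big_cat_nat _ _ _ k) //= big_mkcond [X in _ + X = _]big_mkcond /=.
rewrite (eq_big_nat _ _ (F2 := fun i => if P i then A else 0)); last by move=> i /andP [_ ->].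
rewrite [X in _ + X](eq_big_nat _ _ (F2 := fun i => if P i then B else 0)); last first.
  by move=> i /andP [ki _]; rewrite ltnNge ki.
by rewrite !E /index_iota subn0.
Qed.

Lemma count_neq_iota (i lo len : nat) :
  count (fun j => j != i) (iota lo len) = len - (lo <= i < lo + len).
Proof.
have := count_predC (pred1 i) (iota lo len).
rewrite size_iota (count_uniq_mem _ (iota_uniq _ _)) mem_iota => H.
change (count (predC (pred1 i)) (iota lo len) = len - (lo <= i < lo + len)).
by rewrite -{2}H addKn.
Qed.

Lemma count_true_iota lo len : count (fun _ => true) (iota lo len) = len.
Proof. by rewrite count_predT size_iota. Qed.

Section Count.
Variables (n a : nat) (w : 'I_n -> nat).
Hypothesis w1 : forall i, 1 <= w i.

Definition stdP (e : 'I_n -> nat) :=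
  [forall i, e i < w i] &&
  [forall i, forall j, (i != j) ==> ~~((w i - 1 <= e i) && (w j - 1 <= e j))].
Definition S0 (e : 'I_n -> nat) := [forall j, 0 <= e j < w j - 1].
Definition Si i (e : 'I_n -> nat) :=
  [forall j, (if j == i then w i - 1 else 0) <= e j < (if j == i then w i else w j - 1)].

Lemma stdP_split e : (stdP e : nat) = S0 e + \sum_i (Si i e : nat).
Proof.
have wS i : w i = (w i - 1).+1 by rewrite subn1 prednK.
have SiE i : Si i e = (e i == w i - 1) && [forall j, (j != i) ==> (e j < w j - 1)].
  apply/forallP/andP => [H|[/eqP ei /forallP H] j].
    split; first by have := H i; rewrite eqxx => /andP [h1 h2]; rewrite eqn_leq h1 andbT -ltnS -wS.
    by apply/forallP => j; apply/implyP => /negbTE ji; have := H j; rewrite ji.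
  case: eqP => [->|/eqP ji]; first by rewrite ei leqnn {2}wS ltnS leqnn.
  by have := H j; rewrite ji.
case S0e: (S0 e).
  have Si0 i : Si i e = false.
    by rewrite SiE; move/forallP: S0e => /(_ i) /=; rewrite ltn_neqAle => /andP [/negbTE -> _].
  rewrite big1 ?addn0; last by move=> i _; rewrite Si0.
  move/forallP: S0e => H; rewrite /stdP.
  have -> : [forall i, e i < w i].
    by apply/forallP => i; have := H i; rewrite /= {2}wS ltnS; apply: ltnW.
  have -> // : [forall i, forall j, (i != j) ==> ~~((w i - 1 <= e i) && (w j - 1 <= e j))].
  by apply/forallP => i; apply/forallP => j; apply/implyP => _; have := H i => /= hi; rewrite leqNgt hi.
rewrite add0n.
case: (pickP (fun i => Si i e)) => [i0 Si0|none]; last first.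
  rewrite big1; last by move=> i _; rewrite none.
  case stde: (stdP e) => //; exfalso.
  move: stde => /andP [/forallP lt /forallP pr].
  move/negbT: S0e => /forallPn [j]; rewrite /= -leqNgt => hj.
  have ej : e j = w j - 1 by apply/eqP; rewrite eqn_leq hj -ltnS -wS lt.
  have := none j; rewrite SiE ej eqxx /=; move/negbT => /forallPn [k].
  rewrite negb_imply -leqNgt => /andP [kj hk].
  by have := pr j; move/forallP => /(_ k); rewrite eq_sym kj /= ej leqnn hk.
rewrite (bigD1 i0) //= Si0 big1 ?addn0; last first.
  move=> i ni; move: Si0; rewrite !SiE => /andP [/eqP e0 /forallP H].
  apply/eqP; rewrite eqb0 negb_and; apply/orP; right; apply/forallPn; exists i0.
  by rewrite negb_imply (eq_sym i0 i) ni /= e0 ltnn.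
move: Si0; rewrite SiE => /andP [/eqP e0 /forallP H].
apply/eqP; rewrite eqb1; apply/andP; split.
  apply/forallP => j; case: (eqVneq j i0) => [->|ji]; first by rewrite e0 {2}wS.
  by have := H j; rewrite ji /= => /ltn_trans; apply; rewrite {2}wS.
apply/forallP => i; apply/forallP => j; apply/implyP => ij.
case: (eqVneq i i0) => [ei|ni].
  by move: ij; rewrite ei => /negbTE ij; have := H j; rewrite eq_sym ij /= ltnNge => /negbTE ->; rewrite andbF.
by have := H i; rewrite ni /= ltnNge => /negbTE ->.
Qed.

Hypothesis wa : forall i, w i <= a.

Lemma sum_bool_card (T : finType) (P : pred T) : \sum_x (P x : nat) = #|[set x | P x]|.
Proof. by rewrite -sum1dep_card [RHS]big_mkcond. Qed.

Lemma card_std : #|[set f : {ffun 'I_n -> 'I_a} | stdP (fun i => f i)]|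
  = \prod_i (w i - 1) + \sum_i \prod_(j | j != i) (w j - 1).
Proof.
rewrite -sum_bool_card (eq_bigr (fun f : {ffun 'I_n -> 'I_a} =>
   S0 (fun i => f i) + \sum_i (Si i (fun i => f i) : nat))); last first.
  by move=> f _; rewrite -stdP_split.
rewrite big_split /= exchange_big /= sum_bool_card.
have -> : #|[set x : {ffun 'I_n -> 'I_a} | S0 (fun i => x i)]| = \prod_i (w i - 1).
  rewrite (@card_fam n a (fun _ => 0) (fun i => w i - 1)).
    by apply: eq_bigr => i _; rewrite subn0.
  by move=> i; apply: leq_trans (wa i); apply: leq_subr.
congr (_ + _); apply: eq_bigr => i _; rewrite sum_bool_card.
rewrite (@card_fam n a (fun j => if j == i then w i - 1 else 0)
                  (fun j => if j == i then w i else w j - 1)); last first.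
  by move=> j; case: ifP => _; [apply: wa | apply: leq_trans (wa j); apply: leq_subr].
rewrite [RHS]big_mkcond; apply: eq_bigr => j _.
case: (eqVneq j i) => [->|_] /=; last by rewrite subn0.
by rewrite subKn.
Qed.
End Count.


Lemma formula n s a : s <= n ->
  \prod_(i < n) (omega s a i - 1) + \sum_(i < n) \prod_(j < n | j != i) (omega s a j - 1)
  = (a-1)^(n-s) * (a-1-1)^s + (a-1)^(n-s-1) * (a-1-1)^s * (n-s)
    + (a-1)^(n-s) * (a-1-1)^(s-1) * s.
Proof.
move=> sn; set k := n - s.
have kn : k <= n by apply: leq_subr.
have nk : n - k = s by rewrite subKn.
have E (j : 'I_n) : omega s a j - 1 = if j < k then a - 1 else a - 1 - 1.
  by rewrite /omega; case: ifP.
rewrite (eq_bigr _ (fun j _ => E j)).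
have -> := (@prod_split n k xpredT (a-1) (a-1-1) kn).
rewrite !count_predT !size_iota nk -addnA; congr (_ + _).
rewrite (eq_bigr (fun i : 'I_n => if i < k then (a-1)^(k-1) * (a-1-1)^s
                                  else (a-1)^k * (a-1-1)^(s-1))); last first.
  move=> i _.
  have -> : \prod_(j < n | j != i) (omega s a j - 1)
        = \prod_(j < n | (j : nat) != i) (if j < k then a - 1 else a - 1 - 1).
    by apply: eq_big => // j _; apply: E.
  rewrite (@prod_split n k (fun j => j != i)) // !count_neq_iota nk.
  have -> : k + s = n by rewrite /k subnK.
  rewrite add0n ltn_ord andbT /=; case: ltnP => ik /=.
    by rewrite subn0.
  by rewrite subn0.
have -> := (@sum_split n k xpredT _ _ kn).
by rewrite !count_predT !size_iota nk.
Qed.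

Local Open Scope ring_scope.

Section Ideal.
Variables (K : fieldType) (n : nat) (I : finType) (g : I -> {mpoly K[n]}).

Lemma in_ideal0 : in_ideal g 0.
Proof. by exists (fun _ => 0); rewrite big1 // => i _; rewrite mul0r. Qed.

Lemma in_idealD p q : in_ideal g p -> in_ideal g q -> in_ideal g (p + q).
Proof.
move=> [c1 ->] [c2 ->]; exists (fun i => c1 i + c2 i).
by rewrite -big_split /=; apply: eq_bigr => i _; rewrite mulrDl.
Qed.

Lemma in_idealZ a p : in_ideal g p -> in_ideal g (a *: p).
Proof.
move=> [c ->]; exists (fun i => a *: c i).
by rewrite scaler_sumr; apply: eq_bigr => i _; rewrite scalerAl.
Qed.

Lemma in_ideal_gen i q : in_ideal g (q * g i).
Proof.
exists (fun j => if j == i then q else 0).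
rewrite (bigD1 i) //= eqxx big1 ?addr0 // => j /negbTE ->; exact: mul0r.
Qed.

Lemma in_ideal_sum (T : Type) (r : seq T) (P : pred T) F :
  (forall x, P x -> in_ideal g (F x)) -> in_ideal g (\sum_(x <- r | P x) F x).
Proof.
move=> H; apply: (big_ind (in_ideal g)) => //; [exact: in_ideal0 | exact: in_idealD].
Qed.

Variables (live : I -> bool) (mon : I -> 'X_{1..n}).
Hypothesis gE : forall t, g t = if live t then 'X_[mon t] else 0.

Definition stdm (m : 'X_{1..n}) := [forall t, live t ==> ~~ (mon t <= m)%MM].

Lemma nonstd_in m : ~~ stdm m -> in_ideal g 'X_[m].
Proof.
move=> /forallPn [t]; rewrite negb_imply negbK => /andP [lt le].
have -> : 'X_[m] = 'X_[(m - mon t)%MM] * g t by rewrite gE lt -mpolyXD submK.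
exact: in_ideal_gen.
Qed.

Lemma supp_nonstd q : (forall m, m \in msupp q -> ~~ stdm m) -> in_ideal g q.
Proof.
move=> H; rewrite (mpolyE q) big_seq; apply: in_ideal_sum => m /H /nonstd_in.
exact: in_idealZ.
Qed.

Lemma coef_ideal_std p m : in_ideal g p -> stdm m -> p@_m = 0.
Proof.
move=> [c ->] /forallP st; rewrite raddf_sum big1 // => t _.
rewrite gE; case: ifP => lt; last by rewrite mulr0 raddf0.
move: (st t); rewrite lt /= => nle; apply/eqP.
rewrite -[_ == 0]negbK -mcoeff_msupp; move: nle; apply: contra.
rewrite (perm_mem (msuppMX _ _)) => /mapP [m' _ ->]; exact: lem_addr.
Qed.

Lemma quot_dim_mono d (b : 'I_d -> 'X_{1..n}) : injective b ->
  (forall k, stdm (b k)) -> (forall m, stdm m -> exists k, b k = m) ->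
  quot_dim g d.
Proof.
move=> binj bst bsur; exists (fun k => 'X_[b k]); split.
  move=> p; exists (fun k => p@_(b k)); apply: supp_nonstd => m.
  rewrite mcoeff_msupp; apply: contraL => /bsur [k0 <-].
  rewrite mcoeffB raddf_sum (bigD1 k0) //= big1 ?addr0.
    by rewrite mcoeffZ mcoeffX eqxx mulr1 subrr eqxx.
  move=> k /negbTE nk; rewrite mcoeffZ mcoeffX.
  by rewrite (inj_eq binj) nk mulr0.
move=> c Hin k; have := coef_ideal_std Hin (bst k).
rewrite raddf_sum (bigD1 k) //= big1 ?addr0.
  by rewrite mcoeffZ mcoeffX eqxx mulr1.
move=> j /negbTE nk; rewrite mcoeffZ mcoeffX.
by rewrite (inj_eq binj) nk mulr0.
Qed.
End Ideal.

Lemma thetaE l (x : int) : theta l x = x ^+ l + x ^+ (l - 1) *+ l.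
Proof.
case: l => [|l] /=; first by rewrite expr0 mulr0n addr0.
by rewrite subn1 /= mulrDr -exprSr -natz mulr_natr.
Qed.

Lemma ident n s (x : int) : (s <= n)%N ->
  \sum_(i < s.+1) (-1) ^+ i * ('C(s, i))%:Z * theta (n - i) x
  = x ^+ (n - s) * (x - 1) ^+ s + x ^+ (n - s - 1) * (x - 1) ^+ s *+ (n - s)
    + x ^+ (n - s) * (x - 1) ^+ (s - 1) *+ s.
Proof.
move=> sn; set k := (n - s)%N.
pose P : {poly int} := 'X^k * ('X - 1) ^+ s.
have PE : P = \sum_(i < s.+1) ((-1) ^+ i * ('C(s, i))%:Z) *: 'X^(n - i).
  rewrite /P exprDn mulr_sumr; apply: eq_bigr => [[i /= hi]] _.
  have -> : 'X^(n - i) = 'X^k * 'X^(s - i) :> {poly int}.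
    by rewrite -exprD; congr (_ ^+ _); rewrite /k; lia.
  rewrite -mul_polyC rmorphM /= rmorphXn /= rmorphN /= polyC1 -natz.
  ring.
have HP : P.[x] = x ^+ k * (x - 1) ^+ s by rewrite /P !hornerE.
have HD : (P^`()).[x] = x ^+ (k - 1) * (x - 1) ^+ s *+ k
                       + x ^+ k * (x - 1) ^+ (s - 1) *+ s.
  rewrite /P derivM derivXn deriv_exp -polyC1 derivXsubC mul1r.
  rewrite !(hornerE, hornerMn) !subn1 /=; ring.
have -> : \sum_(i < s.+1) (-1) ^+ i * ('C(s, i))%:Z * theta (n - i) x
   = P.[x] + (P^`()).[x].
  rewrite PE horner_sum raddf_sum horner_sum -big_split /=.
  apply: eq_bigr => i _; rewrite thetaE derivZ derivXn !(hornerE, hornerMn) subn1; ring.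
by rewrite HP HD addrA.
Qed.

Local Close Scope ring_scope.

Lemma eq_stdP n (w : 'I_n -> nat) e1 e2 : e1 =1 e2 -> stdP w e1 = stdP w e2.
Proof.
move=> E; rewrite /stdP; congr andb; apply: eq_forallb => i; first by rewrite E.
by apply: eq_forallb => j; rewrite !E.
Qed.

Lemma lemU n (i : 'I_n) k (m : 'X_{1..n}) : (U_(i) *+ k <= m)%MM = (k <= m i).
Proof.
apply/mnm_lepP/idP => [H | H j]; first by have := H i; rewrite mulmnE mnm1E eqxx mul1n.
by rewrite mulmnE mnm1E; case: eqP => [<-|_]; rewrite ?mul1n ?mul0n.
Qed.

Lemma lemUU n (i j : 'I_n) k1 k2 (m : 'X_{1..n}) : i != j ->
  (U_(i) *+ k1 + U_(j) *+ k2 <= m)%MM = (k1 <= m i) && (k2 <= m j).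
Proof.
move=> ij; apply/mnm_lepP/andP => [H | [H1 H2] l].
  split.
    by have := H i; rewrite mnmDE !mulmnE !mnm1E eqxx eq_sym (negbTE ij) mul1n mul0n addn0.
  by have := H j; rewrite mnmDE !mulmnE !mnm1E eqxx (negbTE ij) mul1n mul0n.
rewrite mnmDE !mulmnE !mnm1E.
case: (eqVneq i l) => [il|nil]; case: (eqVneq j l) => [jl|njl] /=.
- by move: ij; rewrite il jl eqxx.
- by rewrite -il mul1n mul0n addn0.
- by rewrite -jl mul0n mul1n.
- by rewrite !mul0n.
Qed.

Section Main.
Variables (K : fieldType) (n s a : nat).
Hypotheses (sn : (s <= n)%N) (a1 : (1 <= a)%N) (a2 : (1 <= s)%N -> (2 <= a)%N).

Definition live (t : 'I_n + ('I_n * 'I_n)) :=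
  match t with inl _ => true | inr (i, j) => i != j end.
Definition mon (t : 'I_n + ('I_n * 'I_n)) : 'X_{1..n} :=
  match t with
  | inl i => (U_(i) *+ omega s a i)%MM
  | inr (i, j) => (U_(i) *+ (omega s a i - 1) + U_(j) *+ (omega s a j - 1))%MM
  end.

Lemma IgensE t : @Igens K n s a t = if live t then 'X_[mon t] else 0%R.
Proof.
case: t => [i|[i j]] /=; first by rewrite mpolyXn.
by case: ifP => // _; rewrite mpolyXD !mpolyXn.
Qed.

Definition w (i : 'I_n) := omega s a i.

Lemma stdmE m : stdm live mon m = stdP w (fun i => m i).
Proof.
apply/forallP/andP => [H | [/forallP H1 /forallP H2] [i|[i j]]] /=.
  split.
    by apply/forallP => i; have := H (inl i); rewrite /= lemU -ltnNge.
  apply/forallP => i; apply/forallP => j; apply/implyP => ij.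
  by have := H (inr (i, j)); rewrite /= ij lemUU.
  by rewrite lemU -ltnNge; apply: H1.
apply/implyP => ij; rewrite lemUU //.
by have := H2 i => /forallP /(_ j); rewrite ij.
Qed.


Definition Nval := ((a-1)^(n-s) * (a-1-1)^s + (a-1)^(n-s-1) * (a-1-1)^s * (n-s)
    + (a-1)^(n-s) * (a-1-1)^(s-1) * s)%N.

Lemma w1 i : (1 <= w i)%N.
Proof.
rewrite /w /omega; case: ifP => // /negbT; rewrite -leqNgt => h.
have io := ltn_ord i; have s1 : (1 <= s)%N by lia.
have := a2 s1; lia.
Qed.

Lemma wa' i : (w i <= a)%N.
Proof. by rewrite /w /omega; case: ifP => // _; apply: leq_subr. Qed.

Lemma wa i : (w i <= a.+1)%N.
Proof. exact: leq_trans (wa' i) (leqnSn a). Qed.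

Lemma main_dim : quot_dim (@Igens K n s a) Nval.
Proof.
have -> : Nval = #|[set f : {ffun 'I_n -> 'I_a.+1} | stdP w (fun i => f i)]|.
  by rewrite (card_std w1 wa); apply: esym; apply: formula.
set T := [set f : {ffun 'I_n -> 'I_a.+1} | _].
pose phi (f : {ffun 'I_n -> 'I_a.+1}) : 'X_{1..n} := [multinom (f i : nat) | i < n].
apply: (@quot_dim_mono _ _ _ _ live mon IgensE _ (fun k => phi (enum_val k))).
- move=> k1 k2 /= H; apply: enum_val_inj; apply/ffunP => i; apply/val_inj.
  by have := congr1 (fun m : 'X_{1..n} => m i) H; rewrite /= !mnmE.
- move=> k; rewrite stdmE (@eq_stdP _ w _ (fun i => enum_val k i)).
    by have := enum_valP k; rewrite inE.
  by move=> i; rewrite mnmE.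
move=> m; rewrite stdmE => Hm.
have Hlt i : (m i <= a)%N.
  move: Hm => /andP [/forallP H1 _]; have := H1 i; have := wa' i; lia.
pose f := [ffun i => (inord (m i) : 'I_a.+1)].
have fT : f \in T.
  by rewrite inE (@eq_stdP _ w _ (fun i => m i)) // => i; rewrite ffunE inordK // ltnS.
exists (enum_rank_in fT f); rewrite /= enum_rankK_in //.
by apply/mnmP => i; rewrite mnmE ffunE inordK // ltnS.
Qed.
End Main.

Unset Implicit Arguments.
Local Open Scope ring_scope.

Lemma PoszX (m k : nat) : ((m ^ k)%N)%:Z = (m%:Z) ^+ k.
Proof. by rewrite -!natz natrX. Qed.

Lemma mulrnZ (x : int) k : x *+ k = x * k%:Z.
Proof. by rewrite -mulr_natr natz. Qed.

Theorem lemma2 (K : fieldType) (n r a : nat) :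
  (1 <= n)%N -> (r <= n)%N -> (1 <= a)%N -> ((1 <= r)%N -> (2 <= a)%N) ->
  quot_dim (@Igens K n 0 a) ((a - 1) ^ (n - 1) * (a + n - 1))%N /\
  (exists d : nat, quot_dim (@Igens K n r a) d /\
     (d%:Z = \sum_(i < r.+1) (-1) ^+ i * ('C(r, i))%:Z
                * theta (n - i) ((a - 1)%N%:Z))).
Proof.
move=> n1 rn a1 ra; split.
  have H0 : (1 <= 0)%N -> (2 <= a)%N by [].
  have := @main_dim K n 0 a (leq0n n) a1 H0.
  have -> // : Nval n 0 a = ((a - 1) ^ (n - 1) * (a + n - 1))%N.
  rewrite /Nval; case: n n1 rn => [//|n'] _ _.
  rewrite !subn0 !expn0 !muln1 muln0 addn0 subn1 /= expnS.
  have -> : (n'.+1 - 1 = n')%N by lia.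
  set y := (a.-1 ^ n')%N; nia.
exists (Nval n r a); split; first exact: main_dim.
rewrite (ident _ rn) /Nval !PoszD !PoszM !PoszX.
case: r rn ra => [|r'] rn ra.
  by rewrite !expr0 !mulrnZ.
have a2 := ra isT.
have -> : ((a - 1 - 1)%N)%:Z = ((a - 1)%N)%:Z - 1 by rewrite subzn //; lia.
by rewrite !mulrnZ.
Qed.
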